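(* Let $0<a\le 1$, $b=2-a$, $\tfrac12<c_1<1$, and let $(k_a(t),k_b(t))$ be the Markov chain $K$ described in the context, started from any state with $k_a+k_b\ge 2c_1 n$. Let $\tau_a$ be the first time with $k_a=n$. Then there is a constant $C$ depending only on $a,c_1$ such that $$\mathbb{E}\,\tau_a\le \frac{n}{a(2c_1-1)}\log\big((2c_1-1)n\big)+Cn .$$
   Context: The chain $K$ (it records the numbers $k_a,k_b$ of marked $a$-cards and marked $b$-cards in the second marking phase of a biased transposition shuffle of $N=2n$ cards, $n$ of each type). Its states are pairs $(k_a,k_b)$ of integers with $0\le k_a,k_b\le n$ and $k_a+k_b\ge n$. From $(k_a,k_b)$ it moves to $(k_a,k_b+1)$ with probability $\frac{2ab(n-k_b)(k_a+k_b+1)}{(2n)^2}$; to $(k_a+1,k_b)$ with probability $\frac{2a^2(n-k_a)(k_a+k_b+1)}{(2n)^2}$; to $(k_a+1,k_b-1)$ with probability $\frac{2a(b-a)(n-k_a)k_b}{(2n)^2}$; and otherwise stays put. *)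

(* Defs.v *)
From Stdlib Require Import Reals Arith.
Open Scope R_scope.

(* Chain K for N = 2n cards, parameters a and b = 2 - a.
   States: pairs (ka, kb) of naturals. *)

Definition b_of (a : R) : R := 2 - a.

(* probability of moving (ka,kb) -> (ka, kb+1) *)
Definition pK_b (a : R) (n ka kb : nat) : R :=
  2 * a * b_of a * (INR n - INR kb) * (INR ka + INR kb + 1) / (2 * INR n) ^ 2.
(* probability of moving (ka,kb) -> (ka+1, kb) *)
Definition pK_a (a : R) (n ka kb : nat) : R :=
  2 * a ^ 2 * (INR n - INR ka) * (INR ka + INR kb + 1) / (2 * INR n) ^ 2.
(* probability of moving (ka,kb) -> (ka+1, kb-1) *)
Definition pK_ab (a : R) (n ka kb : nat) : R :=
  2 * a * (b_of a - a) * (INR n - INR ka) * INR kb / (2 * INR n) ^ 2.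
Definition pK_stay (a : R) (n ka kb : nat) : R :=
  1 - pK_b a n ka kb - pK_a a n ka kb - pK_ab a n ka kb.

Definition is_state (n ka kb : nat) : Prop :=
  (ka <= n)%nat /\ (kb <= n)%nat /\ (n <= ka + kb)%nat.

(* surv a n t ka kb = P_(ka,kb)(tau_a > t), where tau_a = first time t >= 0
   with k_a(t) = n.  Computed by the standard backward recursion. *)
Fixpoint surv (a : R) (n : nat) (t : nat) (ka kb : nat) : R :=
  if Nat.eqb ka n then 0 else
  match t with
  | O => 1
  | S t' =>
      pK_b a n ka kb * surv a n t' ka (S kb)
    + pK_a a n ka kb * surv a n t' (S ka) kb
    + pK_ab a n ka kb * surv a n t' (S ka) (Nat.pred kb)
    + pK_stay a n ka kb * surv a n t' ka kb
  end.

(* Partial sums sum_{t < T} P(tau_a > t); E tau_a = sup_T of these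
   (tail-sum formula), so "E tau_a <= B" iff all partial sums are <= B. *)
Fixpoint tau_partial (a : R) (n T ka kb : nat) : R :=
  match T with
  | O => 0
  | S T' => tau_partial a n T' ka kb + surv a n T' ka kb
  end.

Definition expected_tau_le (a : R) (n ka kb : nat) (B : R) : Prop :=
  forall T : nat, tau_partial a n T ka kb <= B.

(* Main.v *)
Require Import Defs.
From Stdlib Require Import Reals Arith Lra Lia.
Open Scope R_scope.

Lemma ln_le_sub1 (y : R) : 0 < y -> ln y <= y - 1.
Proof.
  intro Hy. destruct (Rle_or_lt (ln y) (y - 1)) as [H|H]; [exact H|].
  exfalso. pose proof (exp_increasing _ _ H) as H1. rewrite exp_ln in H1 by exact Hy.
  pose proof (exp_ineq1_le (y - 1)). lra.
Qed.

Lemma ln_step (m : R) : 2 <= m -> ln (m - 1) <= ln m - 1 / m.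
Proof.
  intro Hm.
  assert (Hq : ln ((m - 1) / m) <= (m - 1) / m - 1) by (apply ln_le_sub1; apply Rdiv_lt_0_compat; lra).
  unfold Rdiv in Hq. rewrite ln_mult in Hq by (try apply Rinv_0_lt_compat; lra).
  rewrite ln_Rinv in Hq by lra.
  assert (E : (m - 1) * / m - 1 = - (1 / m)) by (field; lra). lra.
Qed.

Lemma tau_step (a : R) (n T ka kb : nat) :
  tau_partial a n (S T) ka kb =
  if Nat.eqb ka n then 0 else
    1 + pK_b a n ka kb * tau_partial a n T ka (S kb)
      + pK_a a n ka kb * tau_partial a n T (S ka) kb
      + pK_ab a n ka kb * tau_partial a n T (S ka) (Nat.pred kb)
      + pK_stay a n ka kb * tau_partial a n T ka kb.
Proof.
  revert ka kb. induction T as [|T IH]; intros ka kb.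
  - simpl. destruct (Nat.eqb ka n); simpl; ring.
  - change (tau_partial a n (S (S T)) ka kb) with
      (tau_partial a n (S T) ka kb + surv a n (S T) ka kb).
    rewrite IH at 1. simpl (surv a n (S T) ka kb).
    cbn [tau_partial].
    destruct (Nat.eqb ka n); ring.
Qed.

Definition Vf (a c1 : R) (n ka : nat) : R :=
  if Nat.eqb ka n then 0 else
    INR n / (a * (2 * c1 - 1)) * (1 + ln (INR n - INR ka)).

Lemma Vf_nonneg a c1 n ka : 0 < a -> 1/2 < c1 -> (ka <= n)%nat -> 0 <= Vf a c1 n ka.
Proof.
  intros Ha Hc Hk. unfold Vf. destruct (Nat.eqb ka n) eqn:E; [lra|].
  apply Nat.eqb_neq in E.
  assert (H1 : INR ka + 1 <= INR n) by (rewrite <- S_INR; apply le_INR; lia).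
  assert (Hl : 0 <= ln (INR n - INR ka)).
  { rewrite <- ln_1. destruct (Req_dec (INR n - INR ka) 1) as [e|e].
    - rewrite e; lra.
    - left; apply ln_increasing; lra. }
  apply Rmult_le_pos; [|lra]. apply Rmult_le_pos; [apply pos_INR|].
  left; apply Rinv_0_lt_compat; apply Rmult_lt_0_compat; lra.
Qed.

Section Main.
Variables (a c1 : R) (n : nat).
Hypotheses (ha : 0 < a <= 1) (hc : 1/2 < c1 < 1) (hn : (1 <= n)%nat).

Let d := 2 * c1 - 1.
Let N := INR n.

Lemma N_ge1 : 1 <= N.
Proof. unfold N. replace 1 with (INR 1) by reflexivity. apply le_INR; exact hn. Qed.

Lemma Vstep ka : (ka < n)%nat ->
  Vf a c1 n (S ka) <= Vf a c1 n ka - N / (a * d) / (N - INR ka).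
Proof.
  intro Hk. unfold Vf, d, N.
  assert (E1 : Nat.eqb ka n = false) by (apply Nat.eqb_neq; lia). rewrite E1.
  assert (Hd : 0 < a * (2 * c1 - 1)) by (apply Rmult_lt_0_compat; lra).
  assert (HN : 0 <= INR n / (a * (2 * c1 - 1)))
    by (apply Rmult_le_pos; [apply pos_INR| left; apply Rinv_0_lt_compat; lra]).
  destruct (Nat.eqb (S ka) n) eqn:E2.
  - apply Nat.eqb_eq in E2. rewrite <- E2. rewrite S_INR.
    replace (INR ka + 1 - INR ka) with 1 by ring. rewrite ln_1.
    unfold Rdiv. lra.
  - apply Nat.eqb_neq in E2.
    assert (H2 : INR ka + 2 <= INR n).
    { replace 2 with (INR 2) by reflexivity. rewrite <- plus_INR. apply le_INR. lia. }
    rewrite S_INR. replace (INR n - (INR ka + 1)) with ((INR n - INR ka) - 1) by ring.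
    pose proof (ln_step (INR n - INR ka) ltac:(lra)) as L.
    assert (E : INR n / (a * (2 * c1 - 1)) * (1 + ln (INR n - INR ka)) -
       INR n / (a * (2 * c1 - 1)) / (INR n - INR ka)
       = INR n / (a * (2 * c1 - 1)) * (1 + (ln (INR n - INR ka) - 1 / (INR n - INR ka))))
       by (field; lra).
    rewrite E. apply Rmult_le_compat_l; [exact HN|]. lra.
Qed.

Lemma probs_nonneg ka kb : is_state n ka kb -> (ka < n)%nat ->
  0 <= pK_b a n ka kb /\ 0 <= pK_a a n ka kb /\ 0 <= pK_ab a n ka kb /\
  0 <= pK_stay a n ka kb.
Proof.
  intros [H1 [H2 H3]] Hk.
  pose proof N_ge1 as HN. unfold N in HN.
  assert (Hx : INR ka + 1 <= INR n) by (rewrite <- S_INR; apply le_INR; lia).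
  assert (Hy : INR kb <= INR n) by (apply le_INR; lia).
  assert (Hs : INR n <= INR ka + INR kb) by (rewrite <- plus_INR; apply le_INR; lia).
  pose proof (pos_INR ka) as Px. pose proof (pos_INR kb) as Py.
  set (x := INR ka) in *. set (y := INR kb) in *. set (M := INR n) in *.
  assert (HD : 0 < (2 * M) ^ 2) by (apply pow_lt; lra).
  unfold pK_stay, pK_b, pK_a, pK_ab, b_of. fold x y M.
  assert (P1 : 0 <= 2 * a * (2 - a) * (M - y) * (x + y + 1)).
  { repeat apply Rmult_le_pos; lra. }
  assert (P2 : 0 <= 2 * a ^ 2 * (M - x) * (x + y + 1)).
  { repeat apply Rmult_le_pos; try lra; try (apply pow_le; lra). }
  assert (P3 : 0 <= 2 * a * (2 - a - a) * (M - x) * y).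
  { repeat apply Rmult_le_pos; lra. }
  assert (Q1 : 2 * a * (2 - a - a) * (M - x) * y <= 2 * a * (2 - a - a) * (M - x) * (x + y + 1)).
  { apply Rmult_le_compat_l; [|lra]. repeat apply Rmult_le_pos; lra. }
  assert (Q2 : a * (2 - a) <= 1) by nra.
  assert (Q3 : 2 * a * (2 - a) * (M - y) * (x + y + 1) + 2 * a ^ 2 * (M - x) * (x + y + 1)
              + 2 * a * (2 - a - a) * (M - x) * (x + y + 1)
              = 2 * (a * (2 - a)) * (x + y + 1) * (2 * M - (x + y))) by ring.
  assert (Q4 : 2 * (a * (2 - a)) * (x + y + 1) * (2 * M - (x + y)) <= 2 * (x + y + 1) * (2 * M - (x + y))).
  { assert (0 <= (x + y + 1) * (2 * M - (x + y))) by (apply Rmult_le_pos; lra).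
    nra. }
  assert (Q5 : 2 * (x + y + 1) * (2 * M - (x + y)) <= (2 * M) ^ 2).
  { nra. }
  repeat split; try (apply Rmult_le_pos; [exact P1 || exact P2 || exact P3 | left; apply Rinv_0_lt_compat; exact HD]).
  assert (T : 2 * a * (2 - a) * (M - y) * (x + y + 1) / (2 * M) ^ 2 +
     2 * a ^ 2 * (M - x) * (x + y + 1) / (2 * M) ^ 2 +
     2 * a * (2 - a - a) * (M - x) * y / (2 * M) ^ 2 <= 1).
  { apply Rmult_le_reg_r with ((2 * M) ^ 2); [exact HD|].
    replace ((2 * a * (2 - a) * (M - y) * (x + y + 1) / (2 * M) ^ 2 +
     2 * a ^ 2 * (M - x) * (x + y + 1) / (2 * M) ^ 2 +
     2 * a * (2 - a - a) * (M - x) * y / (2 * M) ^ 2) * (2 * M) ^ 2)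
     with (2 * a * (2 - a) * (M - y) * (x + y + 1) + 2 * a ^ 2 * (M - x) * (x + y + 1)
              + 2 * a * (2 - a - a) * (M - x) * y) by (field; lra).
    lra. }
  lra.
Qed.

Lemma drift ka kb : is_state n ka kb -> (ka < n)%nat -> 2 * c1 * N <= INR ka + INR kb ->
  1 <= (pK_a a n ka kb + pK_ab a n ka kb) * (N / (a * d) / (N - INR ka)).
Proof.
  intros [H1 [H2 H3]] Hk Hs.
  pose proof N_ge1 as HN. unfold N, d in *.
  assert (Hx : INR ka + 1 <= INR n) by (rewrite <- S_INR; apply le_INR; lia).
  assert (Hy : INR kb <= INR n) by (apply le_INR; lia).
  pose proof (pos_INR ka) as Px. pose proof (pos_INR kb) as Py.
  set (x := INR ka) in *. set (y := INR kb) in *. set (M := INR n) in *.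
  unfold pK_a, pK_ab, b_of. fold x y M.
  assert (Hd : 0 < 2 * c1 - 1) by lra.
  assert (E : (2 * a ^ 2 * (M - x) * (x + y + 1) / (2 * M) ^ 2 +
     2 * a * (2 - a - a) * (M - x) * y / (2 * M) ^ 2) *
     (M / (a * (2 * c1 - 1)) / (M - x))
     = (a * (x + y + 1) + (2 - 2 * a) * y) / (2 * M * (2 * c1 - 1))).
  { field. repeat split; lra. }
  rewrite E.
  assert (K1 : (2 - 2 * a) * (x + y - M) <= (2 - 2 * a) * y)
    by (apply Rmult_le_compat_l; lra).
  assert (K2 : (2 - a) * (2 * c1 * M) <= (2 - a) * (x + y))
    by (apply Rmult_le_compat_l; lra).
  assert (K3 : 0 <= a * (1 - c1) * M) by (repeat apply Rmult_le_pos; lra).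
  assert (K4 : 2 * M * (2 * c1 - 1) <= a * (x + y + 1) + (2 - 2 * a) * y) by nra.
  apply Rmult_le_reg_r with (2 * M * (2 * c1 - 1)); [nra|].
  assert (Q : (a * (x + y + 1) + (2 - 2 * a) * y) / (2 * M * (2 * c1 - 1)) * (2 * M * (2 * c1 - 1)) = a * (x + y + 1) + (2 - 2 * a) * y) by (field; lra).
  rewrite Q. lra.
Qed.

Lemma main_ind T : forall ka kb, is_state n ka kb -> 2 * c1 * N <= INR ka + INR kb ->
  tau_partial a n T ka kb <= Vf a c1 n ka.
Proof.
  induction T as [|T IH]; intros ka kb Hst Hs.
  - simpl. apply Vf_nonneg; try lra. apply Hst.
  - rewrite tau_step. destruct (Nat.eqb ka n) eqn:E.
    + apply Vf_nonneg; try lra. apply Hst.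
    + apply Nat.eqb_neq in E.
      destruct Hst as [H1 [H2 H3]].
      assert (Hk : (ka < n)%nat) by lia.
      destruct (probs_nonneg ka kb (conj H1 (conj H2 H3)) Hk) as [Pb [Pa [Pab Pst]]].
      pose proof (drift ka kb (conj H1 (conj H2 H3)) Hk Hs) as Dr.
      pose proof (Vstep ka Hk) as Vs.
      assert (Tb : pK_b a n ka kb * tau_partial a n T ka (S kb) <= pK_b a n ka kb * Vf a c1 n ka).
      { destruct (Nat.eq_dec kb n) as [e|e].
        - subst kb. unfold pK_b. replace (INR n - INR n) with 0 by ring. lra.
        - apply Rmult_le_compat_l; [exact Pb|]. apply IH.
          + unfold is_state; lia.
          + rewrite S_INR. lra. }
      assert (Ta : pK_a a n ka kb * tau_partial a n T (S ka) kb <= pK_a a n ka kb * Vf a c1 n (S ka)).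
      { apply Rmult_le_compat_l; [exact Pa|]. apply IH.
        + unfold is_state; lia.
        + rewrite S_INR. lra. }
      assert (Tab : pK_ab a n ka kb * tau_partial a n T (S ka) (Nat.pred kb) <= pK_ab a n ka kb * Vf a c1 n (S ka)).
      { apply Rmult_le_compat_l; [exact Pab|]. apply IH.
        + unfold is_state; lia.
        + replace (INR (S ka) + INR (Nat.pred kb)) with (INR ka + INR kb). lra.
          rewrite <- !plus_INR. f_equal. lia. }
      assert (Tst : pK_stay a n ka kb * tau_partial a n T ka kb <= pK_stay a n ka kb * Vf a c1 n ka).
      { apply Rmult_le_compat_l; [exact Pst|]. apply IH; [unfold is_state; lia| lra]. }
      assert (V2 : (pK_a a n ka kb + pK_ab a n ka kb) * Vf a c1 n (S ka) <=
                   (pK_a a n ka kb + pK_ab a n ka kb) * (Vf a c1 n ka - N / (a * d) / (N - INR ka))).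
      { apply Rmult_le_compat_l; lra. }
      unfold pK_stay in *. nra.
Qed.
End Main.

Theorem mainTheorem4 (a c1 : R) (ha : 0 < a <= 1) (hc : 1/2 < c1 < 1) :
  exists C : R, forall (n ka kb : nat),
    (1 <= n)%nat ->
    is_state n ka kb ->
    2 * c1 * INR n <= INR ka + INR kb ->
    expected_tau_le a n ka kb
      (INR n / (a * (2 * c1 - 1)) * ln ((2 * c1 - 1) * INR n) + C * INR n).
Proof.
  exists ((1 - ln (2 * c1 - 1)) / (a * (2 * c1 - 1))).
  intros n ka kb hn Hst Hs T.
  eapply Rle_trans; [apply (main_ind a c1 n ha hc hn T ka kb Hst Hs)|].
  assert (HN : 1 <= INR n) by (replace 1 with (INR 1) by reflexivity; apply le_INR; exact hn).
  assert (Hd : 0 < 2 * c1 - 1) by lra.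
  assert (Had : 0 < a * (2 * c1 - 1)) by (apply Rmult_lt_0_compat; lra).
  rewrite ln_mult by lra.
  replace (INR n / (a * (2 * c1 - 1)) * (ln (2 * c1 - 1) + ln (INR n)) +
    (1 - ln (2 * c1 - 1)) / (a * (2 * c1 - 1)) * INR n)
    with (INR n / (a * (2 * c1 - 1)) * (1 + ln (INR n))) by (field; lra).
  assert (HK : 0 <= INR n / (a * (2 * c1 - 1)))
    by (apply Rmult_le_pos; [lra| left; apply Rinv_0_lt_compat; lra]).
  assert (L0 : 0 <= ln (INR n)).
  { rewrite <- ln_1. destruct (Req_dec (INR n) 1) as [e|e]; [rewrite e; lra|].
    left; apply ln_increasing; lra. }
  unfold Vf. destruct (Nat.eqb ka n) eqn:E.
  - apply Rmult_le_pos; lra.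
  - apply Nat.eqb_neq in E. destruct Hst as [H1 _].
    assert (Hx : INR ka + 1 <= INR n) by (rewrite <- S_INR; apply le_INR; lia).
    pose proof (pos_INR ka).
    apply Rmult_le_compat_l; [exact HK|].
    assert (ln (INR n - INR ka) <= ln (INR n)).
    { destruct (Req_dec (INR ka) 0) as [e|e].
      - rewrite e, Rminus_0_r; lra.
      - left; apply ln_increasing; lra. }
    lra.
Qed.
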